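(* Let $K$ be an $n\times d$ real matrix with rows $K_1,\dots,K_n$, let $0<\delta_2\le\delta_1\le1/4$, and let $S\subseteq[n]$ satisfy (i) for all $j,\ell\in S$ with $j\ne\ell$: $|K_jK_\ell^T|\le\delta_1\min(\|K_j\|_2^2,\|K_\ell\|_2^2)$; (ii) for all $j\in S$, $\ell\notin S$: $|K_\ell K_j^T|\le\delta_2\min(\|K_j\|_2^2,\|K_\ell\|_2^2)$. Assume $K_i\neq0$ for all $i\in S$. Let $\rho=\frac{1}{1+\delta_1^2|S|+\delta_2^2n}$ and $U=\{i\in[n]:\tau_i(K)\ge\rho\}$. Then $S\subseteq U$ and $|U|\le d\,(1+\delta_1^2|S|+\delta_2^2n)$.
   Context: The leverage score of row $i$ of $K$ is $\tau_i(K)=\sup_{y\in\mathbb{R}^d:\,Ky\ne0}\frac{\langle K_i,y\rangle^2}{\sum_{j=1}^n\langle K_j,y\rangle^2}$, equivalently $K_i(K^TK)^{+}K_i^T$ with $^{+}$ the Moore–Penrose pseudoinverse. $[n]=\{1,\dots,n\}$. *)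

(* Defs.v *)
From HB Require Import structures.
From mathcomp Require Import all_boot all_order all_algebra.
From mathcomp Require Import boolp classical_sets reals.
Set Implicit Arguments. Unset Strict Implicit. Unset Printing Implicit Defensive.
Import Order.TTheory GRing.Theory Num.Theory.
Local Open Scope ring_scope.
Local Open Scope classical_set_scope.

Definition rdot (R : realType) (d : nat) (u v : 'rV[R]_d) : R :=
  \sum_(k < d) u 0 k * v 0 k.

(* Leverage score of row i of K, via the sup definition:
   tau_i(K) = sup_{y : K y <> 0} <K_i,y>^2 / sum_j <K_j,y>^2.
   (mathcomp's sup of the empty set is 0, matching the pseudoinverse
   formula K_i (K^T K)^+ K_i^T = 0 when K = 0.) *)
Definition leverage (R : realType) (n d : nat) (K : 'M[R]_(n, d)) (i : 'I_n) : R :=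
  sup [set r : R | exists y : 'cV[R]_d, K *m y != 0 /\
         r = ((K *m y) i 0) ^+ 2 / \sum_(j < n) ((K *m y) j 0) ^+ 2].

(* Main.v *)
Require Import Defs.
From HB Require Import structures.
From mathcomp Require Import all_boot all_order all_algebra.
From mathcomp Require Import boolp classical_sets reals.
From mathcomp Require Import ring lra.
Import Order.TTheory GRing.Theory Num.Theory.
Local Open Scope ring_scope.

Lemma CSineq (R : realType) n (f g : 'I_n -> R) :
  (\sum_j f j * g j) ^+ 2 <= (\sum_j f j ^+ 2) * (\sum_j g j ^+ 2).
Proof.
set a := \sum_j f j ^+ 2; set b := \sum_j f j * g j; set c := \sum_j g j ^+ 2.
have a0 : 0 <= a by apply: sumr_ge0 => j _; exact: sqr_ge0.
have [az|ap] := eqVneq a 0.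
  have fz : forall j, f j = 0.
    move=> j; apply/eqP; rewrite -sqrf_eq0; apply/eqP.
    by move: az => /psumr_eq0P -> // k _; exact: sqr_ge0.
  rewrite /b big1 ?expr0n ?az ?mul0r // => j _; by rewrite fz mul0r.
have apos : 0 < a by rewrite lt0r ap.
have E : \sum_j (b * f j - a * g j) ^+ 2 = a * (a * c - b ^+ 2).
  have -> : \sum_j (b * f j - a * g j) ^+ 2 =
     \sum_j (b ^+ 2 * f j ^+ 2 + (- (2 * a * b)) * (f j * g j) + a ^+ 2 * g j ^+ 2).
    by apply: eq_bigr => j _; ring.
  rewrite !big_split /= -!mulr_sumr -/a -/b -/c; clearbody a b c; ring.
have : 0 <= a * (a * c - b ^+ 2).
  by rewrite -E; apply: sumr_ge0 => j _; exact: sqr_ge0.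
by rewrite pmulr_rge0 // subr_ge0.
Qed.

Lemma lev_bound (R : realType) n d (K : 'M[R]_(n,d)) :
  exists c : 'I_n -> R, (forall i, 0 <= c i) /\ \sum_i c i <= d%:R /\
   forall i (y : 'cV_d), ((K *m y) i 0) ^+ 2 <= c i * \sum_j ((K *m y) j 0) ^+ 2.
Proof.
set C := col_base K; set B := row_base K.
have CTfree : row_free C^T.
  by rewrite /row_free mxrank_tr; exact: col_base_full.
have Ky : forall y : 'cV_d, K *m y = C *m (B *m y) by move=> y; rewrite /C /B mulmxA mulmx_base.
clearbody C B.
set G := C^T *m C.
have Gsym : G^T = G by rewrite /G trmx_mul trmxK.
have Gu : G \in unitmx.
  rewrite -row_free_unit; apply: inj_row_free => v vG0.
  set w := v *m C^T.
  have ww : w *m w^T = 0.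
    by rewrite /w trmx_mul trmxK !mulmxA -(mulmxA v) -/G vG0 mul0mx.
  have w0 : w = 0.
    apply/rowP => k; rewrite [RHS]mxE.
    have : (w *m w^T) 0 0 = 0 by rewrite ww mxE.
    rewrite mxE => /psumr_eq0P H.
    have Hp : forall j : 'I_n, true -> 0 <= w 0 j * w^T j 0.
      by move=> j _; rewrite [X in _ * X]mxE -expr2 sqr_ge0.
    have := H Hp k isT.
    by rewrite [X in _ * X]mxE => /eqP; rewrite mulf_eq0 orbb => /eqP.
  by apply/eqP; rewrite -(mulmx_free_eq0 _ CTfree); apply/eqP; exact w0.
set Gi := invmx G.
set P := C *m Gi *m C^T.
have PC : P *m C = C by rewrite /P -!mulmxA -/G mulVmx // mulmx1.
have PT : P^T = P by rewrite /P !trmx_mul trmxK trmx_inv Gsym mulmxA.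
have PPT : P *m P^T = P by rewrite PT {1}/P !mulmxA PC.
have Pdef : P = C *m Gi *m C^T by [].
clearbody P.
exists (fun i => \sum_k P i k ^+ 2).
split; first by move=> i; apply: sumr_ge0 => k _; exact: sqr_ge0.
split.
  have -> : \sum_i \sum_k P i k ^+ 2 = \tr (P *m P^T).
    rewrite /mxtrace; apply: eq_bigr => i _; rewrite mxE.
    by apply: eq_bigr => k _; rewrite mxE expr2.
  rewrite PPT Pdef -mulmxA mxtrace_mulC -mulmxA -/G mulVmx // mxtrace1 ler_nat.
  exact: rank_leq_col.
move=> i y.
have vP : K *m y = P *m (K *m y) by rewrite Ky [RHS]mulmxA PC.
rewrite {1}vP mxE.
exact: CSineq.
Qed.

Section Aux.
Local Open Scope classical_set_scope.
Lemma sqsum_pos (R : realType) n (v : 'cV[R]_n) :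
  v != 0 -> 0 < \sum_j v j 0 ^+ 2.
Proof.
move=> v0; rewrite lt_def sumr_ge0 ?andbT; last by move=> j _; exact: sqr_ge0.
apply/eqP => /psumr_eq0P H; move/eqP: v0; apply; apply/colP => j.
have := H (fun j _ => sqr_ge0 (v j 0)) j isT.
by rewrite mxE => /eqP; rewrite sqrf_eq0 => /eqP.
Qed.

Lemma rdot_pos (R : realType) d (u : 'rV[R]_d) : u != 0 -> 0 < rdot u u.
Proof.
move=> u0; rewrite /rdot lt_def sumr_ge0 ?andbT; last by move=> j _; rewrite -expr2 sqr_ge0.
apply/eqP => /psumr_eq0P H; move/eqP: u0; apply; apply/rowP => j.
have := H (fun j _ => ltac:(rewrite -expr2; exact: sqr_ge0)) j isT.
by rewrite mxE => /eqP; rewrite mulf_eq0 orbb => /eqP.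
Qed.

Lemma ratio_le (R : realType) n (v : 'cV[R]_n) i c : v != 0 ->
  v i 0 ^+ 2 <= c * \sum_j v j 0 ^+ 2 -> v i 0 ^+ 2 / \sum_j v j 0 ^+ 2 <= c.
Proof. by move=> v0 H; rewrite ler_pdivrMr ?sqsum_pos. Qed.

Lemma lev_upper (R : realType) n d (K : 'M[R]_(n, d)) i c : 0 <= c ->
  (forall y : 'cV_d, ((K *m y) i 0) ^+ 2 <= c * \sum_j ((K *m y) j 0) ^+ 2) ->
  leverage K i <= c.
Proof.
move=> c0 cb; rewrite /leverage.
set A := [set r : R | _].
have [An|An] := pselect (A !=set0).
  apply: ge_sup => // r [y [Ky ->]]; exact: ratio_le.
have -> : A = set0.
  by apply/seteqP; split => // r Ar; apply: An; exists r.
by rewrite sup0.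
Qed.

Lemma lev_lower (R : realType) n d (K : 'M[R]_(n, d)) i c (y : 'cV_d) :
  (forall y : 'cV_d, ((K *m y) i 0) ^+ 2 <= c * \sum_j ((K *m y) j 0) ^+ 2) ->
  K *m y != 0 ->
  ((K *m y) i 0) ^+ 2 / \sum_j ((K *m y) j 0) ^+ 2 <= leverage K i.
Proof.
move=> cb Ky0; apply: sup_upper_bound; last by exists y.
split; first by exists (((K *m y) i 0) ^+ 2 / \sum_j ((K *m y) j 0) ^+ 2), y.
by exists c => r [z [Kz ->]]; exact: ratio_le.
Qed.
End Aux.

Theorem mainTheorem7 (R : realType) (n d : nat) (K : 'M[R]_(n, d))
  (delta1 delta2 : R) (S : {set 'I_n}) :
  0 < delta2 -> delta2 <= delta1 -> delta1 <= 1 / 4 ->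
  (forall j l, j \in S -> l \in S -> j != l ->
     `|rdot (row j K) (row l K)| <=
       delta1 * Num.min (rdot (row j K) (row j K)) (rdot (row l K) (row l K))) ->
  (forall j l, j \in S -> l \notin S ->
     `|rdot (row l K) (row j K)| <=
       delta2 * Num.min (rdot (row j K) (row j K)) (rdot (row l K) (row l K))) ->
  (forall i, i \in S -> row i K != 0) ->
  let rho := 1 / (1 + delta1 ^+ 2 * #|S|%:R + delta2 ^+ 2 * n%:R) in
  let U := [set i : 'I_n | rho <= leverage K i] in
  S \subset U /\
  #|U|%:R <= d%:R * (1 + delta1 ^+ 2 * #|S|%:R + delta2 ^+ 2 * n%:R).
Proof.
move=> d2p d21 d1q H1 H2 Hnz rho U.
have [c [c0 [csum cb]]] := lev_bound _ _ _ K.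
set D := 1 + delta1 ^+ 2 * #|S|%:R + delta2 ^+ 2 * n%:R.
have d1p : 0 < delta1 by apply: lt_le_trans d21.
have Dpos : 0 < D.
  rewrite /D; apply: (@lt_le_trans _ _ 1) => //.
  rewrite -addrA lerDl; apply: addr_ge0; apply: mulr_ge0 => //; exact: sqr_ge0.
split.
  apply/fintype.subsetP => i iS; rewrite inE.
  set y : 'cV_d := (row i K)^T.
  have Ky : forall j, (K *m y) j 0 = rdot (row j K) (row i K).
    by move=> j; rewrite mxE /rdot; apply: eq_bigr => k _; rewrite !mxE.
  set a := rdot (row i K) (row i K).
  have apos : 0 < a by apply: rdot_pos; exact: Hnz.
  have Ky0 : K *m y != 0.
    apply/eqP => /colP /(_ i); rewrite Ky mxE => a0.
    by rewrite /a a0 ltxx in apos.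
  apply: le_trans _ (@lev_lower _ _ _ K i _ y (cb i) Ky0).
  have spos := @sqsum_pos _ _ _ Ky0.
  rewrite (Ky i) -/a /rho ler_pdivlMr // mul1r mulrC ler_pdivrMr //.
  have -> : \sum_j (K *m y) j 0 ^+ 2 = \sum_j rdot (row j K) (row i K) ^+ 2.
    by apply: eq_bigr => j _; rewrite Ky.
  apply: (@le_trans _ _ (\sum_j (a ^+ 2 * ((if j == i then 1 else 0)
        + delta1 ^+ 2 * (if j \in S then 1 else 0) + delta2 ^+ 2)))).
    apply: ler_sum => j _.
    have [ji|ji] := eqVneq j i.
      rewrite ji -/a -[X in X <= _]mulr1 ler_wpM2l ?sqr_ge0 //.
      rewrite -addrA lerDl; apply: addr_ge0; last exact: sqr_ge0.
      by case: (i \in S); rewrite ?mulr1 ?mulr0 ?sqr_ge0.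
    have mle : forall x, Num.min x a <= a by move=> x; rewrite ge_min lexx orbT.
    have mle' : forall x, Num.min a x <= a by move=> x; rewrite ge_min lexx.
    rewrite add0r -real_normK ?num_real //.
    case: ifPn => jS.
      have hb : `|rdot (row j K) (row i K)| <= delta1 * a.
        apply: le_trans (H1 j i jS iS ji) _; rewrite ler_wpM2l ?(ltW d1p) //.
      rewrite mulr1; apply: (@le_trans _ _ ((delta1 * a) ^+ 2)).
        by rewrite expr2 [X in _ <= X]expr2; apply: ler_pM => //; rewrite normr_ge0.
      by rewrite exprMn mulrC ler_wpM2l ?sqr_ge0 // lerDl sqr_ge0.
    have hb : `|rdot (row j K) (row i K)| <= delta2 * a.
      apply: le_trans (H2 i j iS jS) _; rewrite ler_wpM2l ?(ltW d2p) //.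
    rewrite mulr0 add0r -exprMn mulrC expr2 [X in _ <= X]expr2.
    by apply: ler_pM => //; rewrite normr_ge0.
  have E : \sum_j ((if j == i then 1 else 0) + delta1 ^+ 2 * (if j \in S then 1 else 0)
       + delta2 ^+ 2) = D :> R.
    rewrite /D !big_split /=.
    have -> : \sum_j (if j == i then 1 else 0) = 1 :> R.
      by rewrite -big_mkcond big_pred1_eq.
    have -> : \sum_j delta1 ^+ 2 * (if j \in S then 1 else 0) = delta1 ^+ 2 * #|S|%:R.
      by rewrite -mulr_sumr -big_mkcond sumr_const.
    by rewrite sumr_const cardT size_enum_ord [delta2 ^+ 2 * _]mulr_natr.
  by rewrite -/D -E mulr_sumr.
have lev_c : forall i, leverage K i <= c i.
  by move=> i; apply: lev_upper => //; exact: cb.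
have : #|U|%:R * rho <= d%:R.
  rewrite mulr_natl -sumr_const.
  apply: (@le_trans _ _ (\sum_(i in U) c i)).
    apply: ler_sum => i; rewrite inE => iU; exact: le_trans iU (lev_c i).
  apply: le_trans csum.
  rewrite [X in _ <= X](bigID (fun i => i \in U)) /= lerDl.
  by apply: sumr_ge0 => i _.
by rewrite /rho mul1r -/D ler_pdivrMr // mulrC.
Qed.
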